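(* An agent $A$ holding at least $\max\bigl(C^{C}_{\mathrm{signature}},\; C^{C}_{\mathrm{data}} + \max(C^{C}_{\mathrm{validity}}, C^{C}_{\mathrm{integrity}})\bigr)$ tokens and knowing the transactions in all confirmed batches can get any illegal signed batch tag discarded before confirmation.
   Context: Setting: L2 blockchain with an arranger posting signed batch tags $t=(\mathit{batchId},h,\sigma)$ in L1, $h$ the Merkle root hash of batch $b$, $\sigma$ a combined signature; stakers stake at least $s$ tokens on tags; tags are confirmed after a delay unless discarded by a challenge. Legality: (B1) $\sigma$ has at least $f+1$ valid arranger signatures; (B2) only valid transactions; (B3) no duplicates; (B4) no transaction from a previously confirmed batch. Challenge types $x\in\{\mathrm{data},\mathrm{signature},\mathrm{validity},\mathrm{integrity}\}$ (data availability challenge reveals the batch's transactions or removes the tag; signature challenge checks B1; validity challenge B2; integrity challenges B3, B4). $C^{C}_{x}$ denotes the client (challenger) cost for playing challenge $x$, $R^{C}_{x}$ the challenger reward for winning it, $C^{S}_{x}$ the staker cost. Assumed relations: $C^{C}_x \ll R^{C}_x$; $C^{C}_x > C^{S}_x$ (with $C^{S}_{\mathrm{signature}}=0$); $R^{C}_x < s$ for data, validity, integrity; $R^{C}_{\mathrm{signature}}$ is less than the sum of stakes on the tag; the winner of a challenge receives its reward from the loser's stake. *)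

(* Defs.v *)
From HB Require Import structures.
From mathcomp Require Import all_boot all_order all_algebra.
Set Implicit Arguments. Unset Strict Implicit. Unset Printing Implicit Defensive.
Import Order.TTheory GRing.Theory Num.Theory.
Local Open Scope ring_scope.

Record btag (Hash Arr Sig : Type) := BTag {
  batchId : nat;
  troot : Hash;
  tsig : seq (Arr * Sig) }.

Section Legality.
Variables (Tx : eqType) (Arr : finType) (Sig Hash : Type).
Variable valid : pred Tx.
Variable sigv : Arr -> Hash -> Sig -> bool.
Variable f : nat.

Definition nvalid_sigs (t : btag Hash Arr Sig) : nat :=
  #|[set a : Arr | has (fun p => (p.1 == a) && sigv a (troot t) p.2) (tsig t)]|.

Definition B1 (t : btag Hash Arr Sig) : bool := (f.+1 <= nvalid_sigs t)%N.
Definition B2 (b : seq Tx) : bool := all valid b.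
Definition B3 (b : seq Tx) : bool := uniq b.
(* (B4): conf = transaction lists of previously confirmed batches *)
Definition in_confirmed (conf : seq (seq Tx)) (x : Tx) : bool :=
  has (fun cb => x \in cb) conf.
Definition B4 (conf : seq (seq Tx)) (b : seq Tx) : bool :=
  all (fun x => ~~ in_confirmed conf x) b.

Definition legal (conf : seq (seq Tx)) (t : btag Hash Arr Sig) (b : seq Tx) : bool :=
  [&& B1 t, B2 b, B3 b & B4 conf b].
End Legality.

Inductive ckind := CData | CSignature | CValidity | CIntegrity.

Inductive move :=
  | MData
  | MSignature
  | MValidity of nat
  | MIntegrityDup of nat & nat
  | MIntegrityConf of nat.

Definition kind_of (m : move) : ckind :=
  match m with
  | MData => CData
  | MSignature => CSignature
  | MValidity _ => CValidity
  | MIntegrityDup _ _ | MIntegrityConf _ => CIntegrity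
  end.

Record gstate (R : Type) (Tx : Type) := GState {
  bal : R;
  known : option (seq Tx);
  disc : bool }.

Section Game.
Variables (R : realFieldType) (Tx : eqType) (Arr : finType) (Sig Hash : Type).
Variable valid : pred Tx.
Variable sigv : Arr -> Hash -> Sig -> bool.
Variable f : nat.
Variables (cC rC : ckind -> R).   (* challenger costs C^C_x and rewards R^C_x *)

(* A challenger strategy: given the public tag, the transactions of all
   confirmed batches, its current balance and the batch contents if revealed,
   it either plays a challenge (Some m) or waits (None). It does NOT see the
   hidden batch b. *)
Definition strategy :=
  btag Hash Arr Sig -> seq (seq Tx) -> R -> option (seq Tx) -> option move.

(* A staker behaviour for data availability challenges: at step k, true
   means the stakers reveal the batch, false means they withhold it. *)
Definition staker_beh := nat -> bool.

Variables (strat : strategy) (stk : staker_beh).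
Variables (t : btag Hash Arr Sig) (conf : seq (seq Tx)) (b : seq Tx).

Definition wins_content (m : move) : bool :=
  match m with
  | MValidity i => if onth b i is Some x then ~~ valid x else false
  | MIntegrityDup i j => [&& (i < j)%N, (j < size b)%N & onth b i == onth b j]
  | MIntegrityConf i => if onth b i is Some x then in_confirmed conf x else false
  | _ => false
  end.

Definition step (k : nat) (st : gstate R Tx) : gstate R Tx :=
  if disc st then st else
  match strat t conf (bal st) (known st) with
  | None => st
  | Some m =>
    let x := kind_of m in
    if bal st < cC x then st else
    let bal' := bal st - cC x in
    match m with
    | MSignature =>
        if B1 sigv f t then GState bal' (known st) false
        else GState (bal' + rC x) (known st) true
    | MData =>
        if stk k then GState bal' (Some b) false
        else GState (bal' + rC x) (known st) true
    | _ =>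
        if wins_content m then GState (bal' + rC x) (known st) true
        else GState bal' (known st) false
    end
  end.

Fixpoint run (n : nat) (st : gstate R Tx) : gstate R Tx :=
  match n with
  | 0 => st
  | n'.+1 => step n' (run n' st)
  end.
End Game.

(* Main.v *)
Require Import Defs.
From HB Require Import structures.
From mathcomp Require Import all_boot all_order all_algebra.
Import Order.TTheory GRing.Theory Num.Theory.
Local Open Scope ring_scope.

Definition cands {Tx : Type} (b : seq Tx) : seq move :=
  [seq MValidity i | i <- iota 0 (size b)] ++
  [seq MIntegrityDup i j | i <- iota 0 (size b), j <- iota 0 (size b)] ++
  [seq MIntegrityConf i | i <- iota 0 (size b)].

Definition isVI (m : move) : bool :=
  match kind_of m with CValidity | CIntegrity => true | _ => false end.

Lemma all_true {T : Type} (P : pred T) (s : seq T) : (forall x, P x) -> all P s.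
Proof. by move=> H; elim: s => //= x s ->; rewrite H. Qed.

Lemma cands_kind {Tx : Type} (b : seq Tx) : all isVI (cands b).
Proof.
rewrite /cands !all_cat; apply/and3P; split; rewrite ?all_map.
- by apply: all_true.
- move: (iota 0 (size b)) => s2; elim: s2 {1}s2 => // i s IH s2' /=.
  by rewrite all_cat IH andbT all_map; apply: all_true.
- by apply: all_true.
Qed.

Lemma onth_index {Tx : eqType} (b : seq Tx) x :
  x \in b -> onth b (index x b) = Some x.
Proof.
move=> xb; rewrite onthE (nth_map x) ?index_mem // nth_index //.
Qed.

Lemma onth_some {Tx : eqType} (b : seq Tx) x0 i :
  (i < size b)%N -> onth b i = Some (nth x0 b i).
Proof. by move=> ib; rewrite onthE (nth_map x0). Qed.

Lemma has_map_in {T : Type} (P : pred T) (F : nat -> T) (s : seq nat) i :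
  i \in s -> P (F i) -> has P (map F s).
Proof. by move=> iin Pi; rewrite has_map; apply/hasP; exists i. Qed.

Lemma has_pairs_in (P : pred move) (s1 s2 : seq nat) i j :
  i \in s1 -> j \in s2 -> P (MIntegrityDup i j) ->
  has P [seq MIntegrityDup i j | i <- s1, j <- s2].
Proof.
move=> is1 js2 Pij; elim: s1 is1 => //= k s IH; rewrite in_cons has_cat.
case/orP => [/eqP <-|/IH ->]; last by rewrite orbT.
by rewrite (has_map_in _ (fun j => MIntegrityDup i j) _ _ js2).
Qed.

Lemma cands_has {Tx : eqType} (valid : pred Tx) conf (b : seq Tx) :
  ~~ [&& B2 valid b, B3 b & B4 conf b] ->
  has (wins_content valid conf b) (cands b).
Proof.
rewrite /cands !has_cat.
case H2: (B2 valid b) => /=.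
  case H3: (B3 b) => /=.
  move=> H4; apply/orP; right; apply/orP; right.
  move: H4; rewrite /B4 -has_predC => /hasP [x xb /= Hx].
  apply: (has_map_in _ MIntegrityConf _ (index x b)).
    by rewrite mem_iota add0n index_mem.
  by rewrite /= onth_index // negbK in Hx *.
  move=> _; apply/orP; right; apply/orP; left.
  have: ~~ uniq b by rewrite -/(B3 b) H3.
  case: b H2 H3 => [//|x0 b'] H2 H3.
  case/(uniqPn x0) => i [j [ij jb E]].
  apply: (has_pairs_in _ _ _ i j); rewrite ?mem_iota ?add0n //.
    exact: ltn_trans ij jb.
  rewrite /= ij jb /= (onth_some _ x0 _ jb) (onth_some _ x0 _ (ltn_trans ij jb)) E //.
move=> _; apply/orP; left.
move: H2; rewrite /B2 => /negbT; rewrite -has_predC => /hasP [x xb /= Hx].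
apply: (has_map_in _ MValidity _ (index x b)).
  by rewrite mem_iota add0n index_mem.
by rewrite /= onth_index.
Qed.

Theorem mainTheorem5 (R : realFieldType) (Tx : eqType) (Arr : finType)
    (Sig Hash : Type) (valid : pred Tx) (sigv : Arr -> Hash -> Sig -> bool)
    (f : nat) (mroot : seq Tx -> Hash)
    (cC cS rC : ckind -> R) (s : R)
    (HcS0 : forall x, 0 <= cS x)
    (HcSsig : cS CSignature = 0)
    (HcCS : forall x, cS x < cC x)
    (HcCR : forall x, cC x < rC x)
    (HRs : forall x, x <> CSignature -> rC x < s) :
  exists strat : strategy R Tx Arr Sig Hash,
  forall (t : btag Hash Arr Sig) (conf : seq (seq Tx)) (b : seq Tx)
         (stakes : seq R) (stk : staker_beh) (bal0 : R),
    mroot b = troot t ->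
    all (fun v => s <= v) stakes ->
    rC CSignature < \sum_(v <- stakes) v ->
    Num.max (cC CSignature) (cC CData + Num.max (cC CValidity) (cC CIntegrity))
      <= bal0 ->
    ~~ legal valid sigv f conf t b ->
    exists n, disc (run valid sigv f cC rC strat stk t conf b n
                        (GState bal0 None false)).
Proof.
pose strat : strategy R Tx Arr Sig Hash := fun t conf bal kn =>
  match kn with
  | None => if B1 sigv f t then Some MData else Some MSignature
  | Some b' => let cs := cands b' in
      if has (wins_content valid conf b') cs
      then Some (nth MData cs (find (wins_content valid conf b') cs))
      else None
  end.
exists strat => t conf b stakes stk bal0 _ _ _ Hbal Hleg.
have cpos : forall x, 0 < cC x by move=> x; exact: le_lt_trans (HcS0 x) (HcCS x).
move: Hbal; rewrite ge_max => /andP [Hsig Hrest].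
case HB1: (B1 sigv f t).
  have Hdat : cC CData <= bal0.
    apply: le_trans Hrest; rewrite lerDl le_max; apply/orP; left.
    exact: ltW (cpos _).
  case Hs: (stk 0%N).
    exists 2%N.
    rewrite /= /step /= /strat HB1 ltNge Hdat /= Hs /=.
    have Hh : has (wins_content valid conf b) (cands b).
      by apply: cands_has; move: Hleg; rewrite /legal HB1.
    rewrite Hh.
    set m := nth _ _ _.
    have Hw : wins_content valid conf b m by exact: nth_find.
    have Hm : isVI m.
      by apply: (all_nthP MData (cands_kind b)); rewrite -has_find.
    have Hk : cC (kind_of m) <= bal0 - cC CData.
      rewrite lerBrDl; apply: le_trans Hrest; rewrite lerD2l.
      by move: Hm; rewrite /isVI; case: (kind_of m) => // _; rewrite le_max lexx ?orbT.
    rewrite ltNge Hk /=.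
    clearbody m; move: Hw Hm {Hk}.
    by case: m => [||i|i j|i] /= H _; rewrite ?H.
  by exists 1%N; rewrite /= /step /= /strat HB1 ltNge Hdat /= Hs.
by exists 1%N; rewrite /= /step /= /strat HB1 ltNge Hsig /=.
Qed.
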